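(* Let $(V,m)$ be a discrete measure space and $L$ a locally finite selfadjoint operator on $\ell^2(V,m)$ with kernel $l$. Then for $\varphi\in C(V)$ and $\lambda\in\mathbb{R}$ the following are equivalent: (i) $\varphi$ is a generalized eigenfunction of $L$ to the eigenvalue $\lambda$; (ii) $\varphi$ is a $C_c(V)$-eigenfunction of $L$ to the eigenvalue $\lambda$, where $\varphi$ is regarded as the linear functional $u\mapsto(\varphi,u)_m$ on $C_c(V)$.
   Context: A discrete measure space $(V,m)$ is a finite or countable set $V$ with $m:V\to(0,\infty)$; $C(V)$ is the set of all functions $V\to\mathbb{C}$, $C_c(V)$ those of finite support; $\ell^2(V,m)$ has inner product $\langle v,u\rangle=\sum_x\overline{v(x)}u(x)m(x)$. An operator $L$ on $\ell^2(V,m)$ is locally finite if $C_c(V)\subset D(L)$ and there is $l:V\times V\to\mathbb{C}$ with $\{y:l(x,y)\ne0\}$ finite for each $x$ such that $L$ is a restriction of $\tilde L$, $(\tilde Lw)(x)=\sum_y l(x,y)w(y)m(y)$, $w\in C(V)$. $\varphi\in C(V)$ is a generalized eigenfunction to $\lambda$ if $(\tilde L-\lambda)\varphi\equiv0$. The pairing is $(g,u)_m=\sum_x\overline{g(x)}u(x)m(x)$ for $g\in C(V)$, $u\in C_c(V)$. A linear functional $\varphi$ on $C_c(V)$ is a $C_c(V)$-eigenfunction of $L$ to $\lambda$ if $(\varphi,Lu)=\lambda(\varphi,u)$ for all $u\in C_c(V)\cap D(L)$ with $Lu\in C_c(V)$. *)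

(* Defs.v *)
From Stdlib Require Import Reals List ClassicalEpsilon.
From Coquelicot Require Import Coquelicot.
Set Implicit Arguments.
Open Scope R_scope.

Section Discrete.
Variable V : Type.

Definition sum_list (f : V -> C) (F : list V) : C :=
  fold_right (fun x acc => Cplus (f x) acc) (RtoC 0) F.

(* unconditional (net) summation over V: f is summable with sum S *)
Definition has_sum (f : V -> C) (S : C) : Prop :=
  forall eps : R, 0 < eps -> exists F0 : list V,
    forall F : list V, NoDup F -> incl F0 F ->
      Cmod (Cminus (sum_list f F) S) < eps.

Definition tsum (f : V -> C) : C :=
  epsilon (inhabits (RtoC 0)) (fun S => has_sum f S).

Definition finsupp (u : V -> C) : Prop :=
  exists s : list V, forall x, u x <> RtoC 0 -> In x s.

Definition l2 (m : V -> R) (u : V -> C) : Prop :=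
  exists S : C, has_sum (fun x => RtoC (Cmod (u x) ^ 2 * m x)) S.

(* <v,u> = sum_x conj(v x) u x m x ; also the pairing (g,u)_m *)
Definition ip (m : V -> R) (v u : V -> C) : C :=
  tsum (fun x => Cmult (Cmult (Cconj (v x)) (u x)) (RtoC (m x))).

Definition Ltilde (m : V -> R) (l : V -> V -> C) (w : V -> C) (x : V) : C :=
  tsum (fun y => Cmult (Cmult (l x y) (w y)) (RtoC (m y))).

(* An (unbounded) operator on l^2(V,m): domain D, action L (meaningful on D). *)
Definition is_operator (m : V -> R) (D : (V -> C) -> Prop) (L : (V -> C) -> (V -> C)) : Prop :=
  (forall u, D u -> l2 m u) /\
  (forall u, D u -> l2 m (L u)) /\
  D (fun _ => RtoC 0) /\
  (forall (a b : C) u v, D u -> D v ->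
     D (fun x => Cplus (Cmult a (u x)) (Cmult b (v x))) /\
     forall x, L (fun y => Cplus (Cmult a (u y)) (Cmult b (v y))) x
               = Cplus (Cmult a (L u x)) (Cmult b (L v x))).

Definition selfadjoint (m : V -> R) (D : (V -> C) -> Prop) (L : (V -> C) -> (V -> C)) : Prop :=
  is_operator m D L /\
  (forall v, D v <->
     (l2 m v /\ exists w, l2 m w /\ forall u, D u -> ip m v (L u) = ip m w u)) /\
  (forall v w, D v -> l2 m w -> (forall u, D u -> ip m v (L u) = ip m w u) ->
     forall x, L v x = w x).

Definition locally_finite_kernel (m : V -> R) (D : (V -> C) -> Prop)
    (L : (V -> C) -> (V -> C)) (l : V -> V -> C) : Prop :=
  (forall u, finsupp u -> D u) /\
  (forall x, exists s : list V, forall y, l x y <> RtoC 0 -> In y s) /\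
  (forall w, D w -> forall x, L w x = Ltilde m l w x).

Definition gen_eigenfunction (m : V -> R) (l : V -> V -> C) (phi : V -> C) (lam : R) : Prop :=
  forall x, Ltilde m l phi x = Cmult (RtoC lam) (phi x).

Definition Cc_eigenfunction (m : V -> R) (D : (V -> C) -> Prop) (L : (V -> C) -> (V -> C))
    (phi : V -> C) (lam : R) : Prop :=
  forall u, finsupp u -> D u -> finsupp (L u) ->
    ip m phi (L u) = Cmult (RtoC lam) (ip m phi u).
End Discrete.

(* Main.v *)
Require Import Defs.
From Stdlib Require Import Reals List ClassicalEpsilon FunctionalExtensionality Permutation Lra.
From Coquelicot Require Import Coquelicot.
Open Scope R_scope.

Section Aux.
Variable V : Type.

Definition vdec (x y : V) : {x = y} + {x <> y} :=
  excluded_middle_informative (x = y).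

Lemma sum_list_cons (f : V -> C) a F : sum_list f (a :: F) = Cplus (f a) (sum_list f F).
Proof. reflexivity. Qed.

Lemma sum_list_perm (f : V -> C) F G : Permutation F G -> sum_list f F = sum_list f G.
Proof.
  induction 1; simpl; auto.
  - rewrite IHPermutation; auto.
  - unfold sum_list; simpl. ring.
  - congruence.
Qed.

Lemma sum_list_ext (f g : V -> C) F : (forall x, In x F -> f x = g x) -> sum_list f F = sum_list g F.
Proof.
  induction F; simpl; intros H; auto.
  unfold sum_list in *; simpl. rewrite H by auto. rewrite IHF; auto.
Qed.

Lemma sum_list_filter (f : V -> C) (P : V -> bool) F :
  (forall x, In x F -> P x = false -> f x = RtoC 0) ->
  sum_list f F = sum_list f (filter P F).
Proof.
  induction F; cbn [filter In]; intros H; auto.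
  destruct (P a) eqn:E.
  - rewrite !sum_list_cons. rewrite IHF; auto.
  - rewrite sum_list_cons. rewrite H by auto. rewrite IHF; auto. ring.
Qed.

Lemma sum_list_incl (f : V -> C) s F : NoDup s -> NoDup F -> incl s F ->
  (forall z, f z <> RtoC 0 -> In z s) -> sum_list f F = sum_list f s.
Proof.
  intros Ns NF Hi Hs.
  pose (P := fun x => if in_dec vdec x s then true else false).
  rewrite (sum_list_filter f P F).
  - apply sum_list_perm. apply NoDup_Permutation.
    + apply NoDup_filter; auto.
    + auto.
    + intros x. rewrite filter_In. unfold P. destruct (in_dec vdec x s); split; intros H; try tauto.
      split; auto. destruct H; discriminate.
  - intros x _. unfold P. destruct (in_dec vdec x s); try discriminate.
    intros _. destruct (excluded_middle_informative (f x = RtoC 0)); auto.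
    exfalso; auto.
Qed.

Lemma has_sum_unique (f : V -> C) S1 S2 : has_sum f S1 -> has_sum f S2 -> S1 = S2.
Proof.
  intros H1 H2.
  replace S1 with (Cplus (Cminus S1 S2) S2) by ring.
  replace (Cminus S1 S2) with (RtoC 0). { ring. } symmetry.
  apply Cmod_eq_0. apply Rle_antisym; [|apply Cmod_ge_0].
  apply Rnot_lt_le. intros Hp.
  set (e := Cmod (Cminus S1 S2) / 2).
  assert (He : 0 < e) by (unfold e; lra).
  destruct (H1 e He) as [F1 HF1]. destruct (H2 e He) as [F2 HF2].
  set (F := nodup vdec (F1 ++ F2)).
  assert (NF : NoDup F) by apply NoDup_nodup.
  assert (I1 : incl F1 F) by (intros x Hx; apply nodup_In; apply in_or_app; auto).
  assert (I2 : incl F2 F) by (intros x Hx; apply nodup_In; apply in_or_app; auto).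
  specialize (HF1 F NF I1). specialize (HF2 F NF I2).
  assert (Cminus S1 S2 = Cminus (Cminus (sum_list f F) S2) (Cminus (sum_list f F) S1)) as Eq by ring.
  assert (Cmod (Cminus S1 S2) <= Cmod (Cminus (sum_list f F) S2) + Cmod (Cminus (sum_list f F) S1)).
  { rewrite Eq at 1. unfold Cminus at 1. eapply Rle_trans. apply Cmod_triangle.
    rewrite Cmod_opp. lra. }
  unfold e in *. lra.
Qed.

Lemma tsum_eq (f : V -> C) S : has_sum f S -> tsum f = S.
Proof.
  intros H. unfold tsum.
  pose proof (epsilon_spec (inhabits (RtoC 0)) (fun S => has_sum f S) (ex_intro _ S H)) as HS.
  eapply has_sum_unique; eauto.
Qed.

Lemma tsum_fin (f : V -> C) s : NoDup s -> (forall z, f z <> RtoC 0 -> In z s) ->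
  tsum f = sum_list f s.
Proof.
  intros Ns Hs. apply tsum_eq. intros e He. exists s. intros F NF Hi.
  rewrite (sum_list_incl f s F) by auto.
  replace (Cminus (sum_list f s) (sum_list f s)) with (RtoC 0) by ring.
  rewrite Cmod_0. auto.
Qed.

Lemma tsum_fin' (f : V -> C) s : (forall z, f z <> RtoC 0 -> In z s) ->
  tsum f = sum_list f (nodup vdec s).
Proof.
  intros H. apply tsum_fin. apply NoDup_nodup. intros z Hz. apply nodup_In; auto.
Qed.

Lemma tsum_single (f : V -> C) a : (forall z, z <> a -> f z = RtoC 0) -> tsum f = f a.
Proof.
  intros H. rewrite (tsum_fin f (a :: nil)).
  - simpl. unfold sum_list; simpl. ring.
  - constructor; auto. constructor.
  - intros z Hz. destruct (vdec z a); subst; simpl; auto.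
Qed.

Lemma sum_list_conj (f : V -> C) F : Cconj (sum_list f F) = sum_list (fun x => Cconj (f x)) F.
Proof.
  induction F.
  - unfold sum_list; simpl. apply injective_projections; simpl; ring.
  - rewrite !sum_list_cons, Cplus_conj, IHF; auto.
Qed.

Lemma sum_list_mulr (f : V -> C) c F : Cmult (sum_list f F) c = sum_list (fun x => Cmult (f x) c) F.
Proof.
  induction F.
  - unfold sum_list; simpl. ring.
  - rewrite !sum_list_cons, <- IHF. ring.
Qed.

Lemma sum_list_swap (g : V -> V -> C) X Y :
  sum_list (fun x => sum_list (fun y => g x y) Y) X = sum_list (fun y => sum_list (fun x => g x y) X) Y.
Proof.
  revert Y; induction X; intros Y.
  - induction Y; auto. rewrite sum_list_cons, <- IHY. unfold sum_list; simpl; ring.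
  - rewrite sum_list_cons, IHX. clear IHX.
    induction Y.
    + unfold sum_list; simpl; ring.
    + rewrite !sum_list_cons, <- IHY. ring.
Qed.

Lemma sum_list_mull (f : V -> C) c F : Cmult c (sum_list f F) = sum_list (fun x => Cmult c (f x)) F.
Proof.
  induction F.
  - unfold sum_list; simpl. ring.
  - rewrite !sum_list_cons, <- IHF. ring.
Qed.
End Aux.

Lemma conjR (r : R) : Cconj (RtoC r) = RtoC r.
Proof. unfold Cconj, RtoC; simpl. apply injective_projections; simpl; ring. Qed.

Lemma RtoC_neq0 (r : R) : r <> 0 -> RtoC r <> RtoC 0.
Proof. intros H E. apply H. unfold RtoC in E. injection E; auto. Qed.

Lemma Ccancel (a b : C) (r : R) : r <> 0 -> Cmult a (RtoC r) = Cmult b (RtoC r) -> a = b.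
Proof.
  intros Hr H. assert (Hc := RtoC_neq0 r Hr).
  replace a with (Cmult (Cmult a (RtoC r)) (Cinv (RtoC r))) by (field; auto).
  rewrite H. field; auto.
Qed.

Theorem lemma5p1 (V : Type)
  (Vcount : exists f : V -> nat, forall x y, f x = f y -> x = y)
  (m : V -> R) (m_pos : forall x, 0 < m x)
  (D : (V -> C) -> Prop) (L : (V -> C) -> (V -> C)) (l : V -> V -> C)
  (HLsa : selfadjoint m D L) (HLlf : locally_finite_kernel m D L l)
  (phi : V -> C) (lam : R) :
  gen_eigenfunction m l phi lam <-> Cc_eigenfunction m D L phi lam.
Proof.
  destruct HLsa as [Hop [HDiff Huniq]]. destruct HLlf as [Hfin [Hloc HLk]].
  assert (Hadj : forall v u, D v -> D u -> ip m v (L u) = ip m (L v) u).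
  { intros v u Hv Hu. destruct (proj1 (HDiff v) Hv) as [_ [w [Hw Hvw]]].
    rewrite Hvw by auto. replace (L v) with w; auto.
    apply functional_extensionality. intros x. symmetry. apply (Huniq v w Hv Hw Hvw). }
  pose (S := fun x => proj1_sig (constructive_indefinite_description _ (Hloc x))).
  assert (HS : forall x y, l x y <> RtoC 0 -> In y (S x)).
  { intros x y. unfold S. destruct (constructive_indefinite_description _ (Hloc x)) as [s Hs]; simpl. auto. }
  pose (dl := fun y z : V => if vdec V z y then RtoC 1 else RtoC 0).
  assert (Hdfs : forall y, finsupp (dl y)).
  { intros y. exists (y :: nil). intros x H. unfold dl in H. destruct (vdec V x y); [left; auto | congruence]. }
  assert (HLd : forall x y, L (dl y) x = Cmult (l x y) (RtoC (m y))).
  { intros x y. rewrite HLk by (apply Hfin; auto). unfold Ltilde.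
    rewrite (tsum_single _ _ y).
    - unfold dl. destruct (vdec V y y); [ring | congruence].
    - intros z Hz. unfold dl. destruct (vdec V z y); [congruence | ring]. }
  assert (Hsym : forall x y, l x y = Cconj (l y x)).
  { intros x y. assert (E := Hadj (dl x) (dl y) (Hfin _ (Hdfs x)) (Hfin _ (Hdfs y))).
    unfold ip in E. rewrite (tsum_single _ _ x) in E.
    2:{ intros z Hz. unfold dl. destruct (vdec V z x); [congruence|]. rewrite conjR. ring. }
    rewrite (tsum_single _ _ y) in E.
    2:{ intros z Hz. unfold dl. destruct (vdec V z y); [congruence|]. ring. }
    rewrite !HLd in E. unfold dl in E.
    destruct (vdec V x x); [|congruence]. destruct (vdec V y y); [|congruence].
    rewrite Cmult_conj, !conjR in E.
    apply (Ccancel _ _ (m x * m y)). { pose proof (m_pos x); pose proof (m_pos y); nra. }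
    rewrite RtoC_mult. transitivity (Cmult (Cmult (RtoC 1) (Cmult (l x y) (RtoC (m y)))) (RtoC (m x))).
    { ring. } rewrite E. ring. }
  split.
  - intros Hge u Hu HDu HLu. destruct Hu as [su Hsu]. destruct HLu as [sL HsL].
    set (Su := nodup (vdec V) su).
    set (X := nodup (vdec V) (sL ++ flat_map S Su)).
    assert (NX : NoDup X) by apply NoDup_nodup.
    unfold ip at 1. rewrite (tsum_fin _ _ X NX).
    2:{ intros z Hz. unfold X. apply nodup_In. apply in_or_app. left. apply HsL.
        intro E. apply Hz. rewrite E. ring. }
    transitivity (sum_list (fun x => sum_list (fun y =>
        Cmult (Cmult (Cconj (phi x)) (Cmult (Cmult (l x y) (u y)) (RtoC (m y)))) (RtoC (m x))) Su) X).
    { apply sum_list_ext. intros x _. rewrite HLk by (apply Hfin; exists su; auto).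
      unfold Ltilde. rewrite (tsum_fin' _ _ su).
      2:{ intros z Hz. apply Hsu. intro E. apply Hz. rewrite E. ring. }
      rewrite sum_list_mull, sum_list_mulr. reflexivity. }
    rewrite sum_list_swap.
    unfold ip. rewrite (tsum_fin' _ _ su).
    2:{ intros z Hz. apply Hsu. intro E. apply Hz. rewrite E. ring. }
    fold Su. rewrite sum_list_mull. apply sum_list_ext. intros y Hy.
    assert (EL : Ltilde m l phi y = sum_list (fun x => Cmult (Cmult (l y x) (phi x)) (RtoC (m x))) X).
    { unfold Ltilde. apply tsum_fin; auto. intros z Hz. unfold X. apply nodup_In.
      apply in_or_app. right. apply in_flat_map. exists y. split; auto.
      apply HS. intro E. apply Hz. rewrite E. ring. }
    assert (EC : Cconj (Cmult (RtoC lam) (phi y)) = Cconj (Ltilde m l phi y)) by (rewrite Hge; auto).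
    rewrite EL, sum_list_conj, Cmult_conj, conjR in EC.
    transitivity (Cmult (sum_list (fun x => Cconj (Cmult (Cmult (l y x) (phi x)) (RtoC (m x))))  X)
                        (Cmult (u y) (RtoC (m y)))).
    { rewrite sum_list_mulr. apply sum_list_ext. intros x _.
      rewrite !Cmult_conj, conjR, <- (Hsym x y). ring. }
    rewrite <- EC. ring.
  - intros Hcc y.
    assert (HLdfs : finsupp (L (dl y))).
    { exists (S y). intros x Hx. rewrite HLd in Hx. apply HS. intro E. apply Hx.
      rewrite (Hsym x y), E, conjR. ring. }
    assert (H := Hcc (dl y) (Hdfs y) (Hfin _ (Hdfs y)) HLdfs).
    assert (E1 : ip m phi (dl y) = Cmult (Cconj (phi y)) (RtoC (m y))).
    { unfold ip. rewrite (tsum_single _ _ y).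
      - unfold dl. destruct (vdec V y y); [ring|congruence].
      - intros z Hz. unfold dl. destruct (vdec V z y); [congruence|ring]. }
    assert (E2 : ip m phi (L (dl y)) = Cmult (Cconj (Ltilde m l phi y)) (RtoC (m y))).
    { unfold ip. rewrite (tsum_fin' _ _ (S y)).
      2:{ intros x Hx. rewrite HLd in Hx. apply HS. intro E. apply Hx.
          rewrite (Hsym x y), E, conjR. ring. }
      unfold Ltilde. rewrite (tsum_fin' _ _ (S y)).
      2:{ intros x Hx. apply HS. intro E. apply Hx. rewrite E. ring. }
      rewrite sum_list_conj, sum_list_mulr. apply sum_list_ext. intros x _.
      rewrite HLd, (Hsym x y), !Cmult_conj, !conjR. ring. }
    rewrite E1, E2 in H.
    assert (H' : Cconj (Ltilde m l phi y) = Cmult (RtoC lam) (Cconj (phi y))).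
    { apply (Ccancel _ _ (m y)). { specialize (m_pos y); lra. } rewrite H. ring. }
    rewrite <- (Cconj_conj (Ltilde m l phi y)), H', Cmult_conj, conjR, Cconj_conj. reflexivity.
Qed.
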